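(* Let $S$ be an entropy function for a finite set $X$ and $X'\subset X$. Then the function $S'$ on $2^{X'}$ defined by \[ S'(A):=\min_{\hat A\subseteq X\setminus X'}S(A\cup\hat A)\qquad(A\subseteq X')\] is an entropy function for $X'$.
   Context: An entropy function for a finite set $X$ is a function $S:2^X\to[0,\infty)$ with $S(\emptyset)=0$, $S(A)+S(B)\ge S(A\cap B)+S(A\cup B)$ and $S(A)+S(B)\ge S(A\setminus B)+S(B\setminus A)$ for all $A,B\subseteq X$. *)

(* Defs.v *)
From mathcomp Require Import all_boot all_order all_algebra.
Set Implicit Arguments. Unset Strict Implicit. Unset Printing Implicit Defensive.
Import Order.TTheory GRing.Theory Num.Theory.
Local Open Scope ring_scope.

(* An entropy function for the finite set X (a subset of the finite type T):
   a function S on subsets of X (represented as a function on {set T}, only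
   its values on subsets of X matter) with S(empty) = 0, values in [0,oo),
   submodularity and the "difference" inequality for all A, B subsets of X. *)
Definition entropy_function (R : realFieldType) (T : finType) (X : {set T})
    (S : {set T} -> R) : Prop :=
  [/\ S set0 = 0,
      forall A : {set T}, A \subset X -> 0 <= S A,
      forall A B : {set T}, A \subset X -> B \subset X ->
        S (A :&: B) + S (A :|: B) <= S A + S B
    & forall A B : {set T}, A \subset X -> B \subset X ->
        S (A :\: B) + S (B :\: A) <= S A + S B].

(* S'(A) = min over Ahat subset of X \ X' of S(A cup Ahat), with X = [set: T].
   The seed S A is harmless: Ahat = set0 is among the indices. *)
Definition restrict_min (R : realFieldType) (T : finType) (X' : {set T})
    (S : {set T} -> R) (A : {set T}) : R :=
  \big[Order.min/S A]_(Ahat in powerset (~: X')) S (A :|: Ahat).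

(* Main.v *)
Require Import Defs.
From mathcomp Require Import all_boot all_order all_algebra.
Import Order.TTheory GRing.Theory Num.Theory.
Set Implicit Arguments. Unset Strict Implicit.
Local Open Scope ring_scope.

Lemma rm_le (R : realFieldType) (T : finType) (X' : {set T})
    (S : {set T} -> R) (A Ah : {set T}) :
  Ah \subset ~: X' -> restrict_min X' S A <= S (A :|: Ah).
Proof.
move=> h; rewrite /restrict_min.
by apply: (@bigmin_le_cond _ R); rewrite inE.
Qed.

Lemma rm_att (R : realFieldType) (T : finType) (X' : {set T})
    (S : {set T} -> R) (A : {set T}) :
  exists2 Ah : {set T}, Ah \subset ~: X' & restrict_min X' S A = S (A :|: Ah).
Proof.
rewrite /restrict_min.
apply: (big_ind (fun v => exists2 Ah : {set T}, Ah \subset ~: X' & v = S (A :|: Ah))).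
- by exists set0; [exact: sub0set | rewrite setU0].
- move=> x y [a ha ->] [b hb ->]; rewrite minEle.
  by case: ifP => _; [exists a | exists b].
- by move=> i; rewrite inE => hi; exists i.
Qed.

Lemma disj (T : finType) (X' A B : {set T}) :
  A \subset X' -> B \subset ~: X' -> A :&: B = set0.
Proof.
move=> hA hB; apply/setP => x; rewrite !inE.
apply/negP => /andP [xa xb].
by move: (subsetP hA x xa) (subsetP hB x xb); rewrite inE => ->.
Qed.

Theorem proposition26 (R : realFieldType) (T : finType)
    (S : {set T} -> R) (X' : {set T}) :
  entropy_function [set: T] S ->
  entropy_function X' (restrict_min X' S).
Proof.
case=> S0 Spos Ssub Sdiff.
have pos A : 0 <= restrict_min X' S A.
  by have [Ah _ ->] := rm_att X' S A; apply: Spos; apply: subsetT.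
split.
- apply/eqP; rewrite eq_le pos andbT.
  by have := @rm_le R T X' S set0 _ (sub0set (~: X')); rewrite setU0 S0.
- by move=> A _; apply: pos.
- move=> A B hA hB.
  have [a ha ea] := rm_att X' S A; have [b hb eb] := rm_att X' S B.
  rewrite ea eb.
  have h1 : (A :|: a) :&: (B :|: b) = (A :&: B) :|: (a :&: b).
    rewrite setIUl !setIUr (disj hA hb) (setIC a B) (disj hB ha).
    by rewrite set0U setU0.
  have h2 : (A :|: a) :|: (B :|: b) = (A :|: B) :|: (a :|: b).
    by rewrite -!setUA; congr (_ :|: _); rewrite setUCA.
  apply: le_trans (Ssub _ _ (subsetT _) (subsetT _)).
  rewrite h1 h2; apply: lerD; apply: rm_le.
    by apply: subset_trans ha; apply: subsetIl.
  by rewrite subUset ha hb.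
- move=> A B hA hB.
  have [a ha ea] := rm_att X' S A; have [b hb eb] := rm_att X' S B.
  rewrite ea eb.
  have key (A1 B1 a1 b1 : {set T}) : A1 \subset X' -> B1 \subset X' ->
      a1 \subset ~: X' -> b1 \subset ~: X' ->
      (A1 :|: a1) :\: (B1 :|: b1) = (A1 :\: B1) :|: (a1 :\: b1).
    move=> hA' hB' ha' hb'; apply/setP => x; rewrite !inE.
    case xA: (x \in A1); case xB: (x \in B1); case xa: (x \in a1); case xb: (x \in b1) => //=;
      first [ by move: (subsetP hA' x xA) (subsetP hb' x xb); rewrite inE => ->
            | by move: (subsetP hB' x xB) (subsetP ha' x xa); rewrite inE => -> ].
  apply: le_trans (Sdiff _ _ (subsetT _) (subsetT _)).
  rewrite (key A B a b) // (key B A b a) //.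
  by apply: lerD; apply: rm_le; [apply: subset_trans ha | apply: subset_trans hb]; apply: subsetDl.
Qed.
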